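(* Let $S\subseteq[n]$ and $k\in S$. Fix deterministic vectors $\delta_j\in\mathbb{R}^n$ for $j\in S\setminus\{k\}$ and $\delta_j=0$ for $j\notin S$. Suppose agent $k$ regards $M$ as random with distribution $\mathcal{D}_k$ having finite first and second moments, and evaluates a report $\delta_k\in\mathbb{R}^n$ by $\mathbb{E}_{M\sim\mathcal{D}_k}\big[-\langle\delta_k,w_k'\rangle+\gamma_k\langle w_k',\Sigma w_k'\rangle\big]$, where $w_k'=W'e_k$ and $(W',P')$ is the stable point for $M+\Delta$ with $\Delta e_i=\delta_i$ for all $i$. Let $V_k\in\mathbb{R}^{n\times n}$ be defined by $\mathrm{vec}(V_k)=\tfrac12K^{-1}\mathrm{vec}\big(\mathbb{E}_{\mathcal{D}_k}[M]+\mathbb{E}_{\mathcal{D}_k}[M]^T\big)$ and $v_k=V_ke_k$. Then $\delta_k$ maximizes this expected utility if and only if $$T^{(k,k)}\delta_k+\sum_{j\in S,\ j\neq k}T^{(k,j)}\delta_j=\big(2\gamma_k(L^{(k,k)})^T\Sigma-I\big)v_k .$$ Consequently, a matrix $\Delta$ with $\Delta e_j=0$ for $j\notin S$ is a Nash equilibrium (each $k\in S$ maximizing its expected utility above given the others' columns) if and only if these equations hold simultaneously for all $k\in S$; if the joint system has no solution, there is no Nash equilibrium.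
   Context: Fix agents $[n]=\{1,\dots,n\}$. Let $\Sigma\in\mathbb{R}^{n\times n}$ be symmetric positive definite and $\Gamma=\mathrm{diag}(\gamma_1,\dots,\gamma_n)$ with all $\gamma_i>0$. For a matrix of reported negotiating positions $M'\in\mathbb{R}^{n\times n}$, the stable point for $M'$ is the unique pair $(W,P)$ of real $n\times n$ matrices with $W=W^T$, $P^T=-P$ and $M'-P=2\Sigma W\Gamma$; equivalently $\mathrm{vec}(W)=\tfrac12(\Gamma\otimes\Sigma+\Sigma\otimes\Gamma)^{-1}\mathrm{vec}(M'+M'^T)$. Here $\mathrm{vec}$ stacks columns and $e_i$ is the $i$-th standard basis vector. Matrices: $\Pi\in\mathbb{R}^{n^2\times n^2}$ is the commutation matrix, $\Pi\,\mathrm{vec}(X)=\mathrm{vec}(X^T)$. For $Z\in\mathbb{R}^{n^2\times n^2}$, $Z^{(p,q)}$ is its $n\times n$ block in block-row $p$ and block-column $q$. Set $K=\Gamma\otimes\Sigma+\Sigma\otimes\Gamma$, $L=\tfrac12(K^{-1}+K^{-1}\Pi)$, $T^{(k,k)}=L^{(k,k)}+(L^{(k,k)})^T-2\gamma_k(L^{(k,k)})^T\Sigma L^{(k,k)}$, and $T^{(k,j)}=(I-2\gamma_k(L^{(k,k)})^T\Sigma)L^{(k,j)}$ for $j\neq k$. *)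

(* Defs.v *)
From HB Require Import structures.
From mathcomp Require Import all_boot all_order all_algebra.
From mathcomp Require Import all_classical all_reals all_analysis.
Set Implicit Arguments. Unset Strict Implicit. Unset Printing Implicit Defensive.
Import Order.TTheory GRing.Theory Num.Theory.
Local Open Scope ring_scope.

Section Defs.
Variables (R : realType) (n : nat).

(* column-stacking index: entry (i,j) of X sits at position j*n+i of vec X *)
Definition cidx (i j : 'I_n) : 'I_(n * n) := mxvec_index j i.

Definition vec (X : 'M[R]_n) : 'cV[R]_(n * n) :=
  \sum_(i < n) \sum_(j < n) X i j *: delta_mx (cidx i j) 0.
Definition unvec (v : 'cV[R]_(n * n)) : 'M[R]_n :=
  \matrix_(i, j) v (cidx i j) 0.

(* Kronecker product: block (p,q) of A (x) B is A p q * B *)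
Definition kron (A B : 'M[R]_n) : 'M[R]_(n * n) :=
  \sum_(p < n) \sum_(q < n) \sum_(i < n) \sum_(j < n)
     (A p q * B i j) *: delta_mx (cidx i p) (cidx j q).

(* commutation matrix: Pi vec(X) = vec(X^T) *)
Definition commmx : 'M[R]_(n * n) :=
  \sum_(i < n) \sum_(j < n) delta_mx (cidx i j) (cidx j i).

Definition blk (Z : 'M[R]_(n * n)) (p q : 'I_n) : 'M[R]_n :=
  \matrix_(i, j) Z (cidx i p) (cidx j q).

Variables (Sigma : 'M[R]_n) (gam : 'I_n -> R).
Definition Gam : 'M[R]_n := diag_mx (\row_i gam i).

Definition Kmx : 'M[R]_(n * n) := kron Gam Sigma + kron Sigma Gam.
Definition Lmx : 'M[R]_(n * n) :=
  2^-1 *: (invmx Kmx + invmx Kmx *m commmx).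

Definition Tmx (k j : 'I_n) : 'M[R]_n :=
  if j == k then
    blk Lmx k k + (blk Lmx k k)^T - (2 * gam k) *: ((blk Lmx k k)^T *m Sigma *m blk Lmx k k)
  else (1%:M - (2 * gam k) *: ((blk Lmx k k)^T *m Sigma)) *m blk Lmx k j.

Definition stableW (M' : 'M[R]_n) : 'M[R]_n :=
  unvec (2^-1 *: (invmx Kmx *m vec (M' + M'^T))).

Definition is_stable_point (M' W P : 'M[R]_n) : Prop :=
  W^T = W /\ P^T = - P /\ M' - P = 2%:R *: (Sigma *m W *m Gam).

Definition evec (k : 'I_n) : 'cV[R]_n := delta_mx k 0.
Definition ip (x y : 'cV[R]_n) : R := (x^T *m y) 0 0.

Definition colsmx (delta : 'I_n -> 'cV[R]_n) : 'M[R]_n :=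
  \matrix_(i, j) delta j i 0.

Definition utility (k : 'I_n) (delta : 'I_n -> 'cV[R]_n) (M : 'M[R]_n) : R :=
  let w := stableW (M + colsmx delta) *m evec k in
  - ip (delta k) w + gam k * ip w (Sigma *m w).

Definition replace_col (delta : 'I_n -> 'cV[R]_n) (k : 'I_n) (d : 'cV[R]_n) :=
  fun j => if j == k then d else delta j.

Section Prob.
Context (d : measure_display) (Omega : measurableType d)
        (Pk : 'I_n -> probability Omega R) (Mr : Omega -> 'M[R]_n).

Definition exp_utility (k : 'I_n) (delta : 'I_n -> 'cV[R]_n) : R :=
  Rintegral (Pk k) setT (fun w => utility k delta (Mr w)).

Definition best_response (k : 'I_n) (delta : 'I_n -> 'cV[R]_n) : Prop :=
  forall dk : 'cV[R]_n,
    exp_utility k (replace_col delta k dk) <= exp_utility k delta.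

Definition nash (S : {set 'I_n}) (delta : 'I_n -> 'cV[R]_n) : Prop :=
  forall k, k \in S -> best_response k delta.

Definition EM (k : 'I_n) : 'M[R]_n :=
  \matrix_(i, j) Rintegral (Pk k) setT (fun w => Mr w i j).

Definition vk (k : 'I_n) : 'cV[R]_n := stableW (EM k) *m evec k.

Definition br_eq (S : {set 'I_n}) (k : 'I_n) (delta : 'I_n -> 'cV[R]_n) : Prop :=
  Tmx k k *m delta k + \sum_(j in S | j != k) Tmx k j *m delta j
  = ((2 * gam k) *: ((blk Lmx k k)^T *m Sigma) - 1%:M) *m vk k.

End Prob.
End Defs.

(* Main.v *)
Require Import Defs.
From HB Require Import structures.
From mathcomp Require Import all_boot all_order all_algebra.
From mathcomp Require Import all_classical all_reals all_analysis.
From mathcomp Require Import ring lra.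
Set Implicit Arguments. Unset Strict Implicit. Unset Printing Implicit Defensive.
Import Order.TTheory GRing.Theory Num.Theory.
Local Open Scope ring_scope.

Section Idx.
Variables (R : realType) (n : nat).

Lemma cidx_eq (i j a b : 'I_n) : (cidx i j == cidx a b) = (i == a) && (j == b).
Proof.
rewrite /cidx /mxvec_index; apply/eqP/andP => [|[/eqP-> /eqP->]//].
move/cast_ord_inj/enum_rank_inj => [-> ->]; by [].
Qed.

Lemma sum_cidx (F : 'I_(n * n) -> R) :
  \sum_r F r = \sum_(j < n) \sum_(i < n) F (cidx i j).
Proof.
rewrite (reindex _ (curry_mxvec_bij _ _)) /= pair_big /=.
by apply: eq_bigr => -[j i] _.
Qed.

Lemma sum_delta2 (F : 'I_n -> 'I_n -> R) (a b : 'I_n) :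
  \sum_(i < n) \sum_(j < n) F i j * ((i == a) && (j == b))%:R = F a b.
Proof.
rewrite (bigD1 a) //= [X in _ + X]big1 => [|i Hi]; last first.
  by rewrite big1 // => j _; rewrite (negbTE Hi) /= mulr0.
rewrite addr0 (bigD1 b) //= !eqxx mulr1 big1 ?addr0 // => j Hj.
by rewrite (negbTE Hj) andbF mulr0.
Qed.

Lemma vecE (X : 'M[R]_n) a b : vec X (cidx a b) 0 = X a b.
Proof.
rewrite /vec summxE -[RHS](sum_delta2 X a b); apply: eq_bigr => i _.
rewrite summxE; apply: eq_bigr => j _; rewrite !mxE cidx_eq eqxx andbT.
by rewrite (eq_sym i) (eq_sym j).
Qed.

Lemma unvecE (v : 'cV[R]_(n * n)) i j : unvec v i j = v (cidx i j) 0.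
Proof. by rewrite mxE. Qed.

Lemma cV_cidxP (u v : 'cV[R]_(n * n)) :
  (forall i j, u (cidx i j) 0 = v (cidx i j) 0) -> u = v.
Proof.
move=> H; apply/colP => r; case/mxvec_indexP: r => j i; exact: H.
Qed.

Lemma vecK (X : 'M[R]_n) : unvec (vec X) = X.
Proof. by apply/matrixP => i j; rewrite unvecE vecE. Qed.

Lemma unvecK (v : 'cV[R]_(n * n)) : vec (unvec v) = v.
Proof. by apply: cV_cidxP => i j; rewrite vecE unvecE. Qed.

Lemma vec_inj : injective (@vec R n).
Proof. by move=> X Y /(congr1 (@unvec R n)); rewrite !vecK. Qed.

Lemma vecD X Y : vec (X + Y) = vec X + vec Y :> 'cV[R]_(n * n).
Proof. by apply: cV_cidxP => i j; rewrite mxE !vecE mxE. Qed.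

Lemma vecZ a X : vec (a *: X) = a *: vec X :> 'cV[R]_(n * n).
Proof. by apply: cV_cidxP => i j; rewrite mxE !vecE mxE. Qed.

Lemma vec0 : vec 0 = 0 :> 'cV[R]_(n * n).
Proof. by apply: cV_cidxP => i j; rewrite vecE !mxE. Qed.

Lemma unvecD u v : unvec (u + v) = unvec u + unvec v :> 'M[R]_n.
Proof. by apply/matrixP => i j; rewrite !mxE. Qed.

Lemma unvecZ a u : unvec (a *: u) = a *: unvec u :> 'M[R]_n.
Proof. by apply/matrixP => i j; rewrite !mxE. Qed.

Lemma mulmx_cidx (Z : 'M[R]_(n * n)) (v : 'cV[R]_(n * n)) r :
  (Z *m v) r 0 = \sum_(j < n) \sum_(i < n) Z r (cidx i j) * v (cidx i j) 0.
Proof. by rewrite mxE sum_cidx. Qed.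

Lemma kronE (A B : 'M[R]_n) i p j q :
  kron A B (cidx i p) (cidx j q) = A p q * B i j.
Proof.
rewrite /kron summxE.
transitivity (\sum_(p' < n) \sum_(q' < n) (A p' q' *
   \sum_(i' < n) \sum_(j' < n) B i' j' * ((i' == i) && (j' == j))%:R)
   * ((p' == p) && (q' == q))%:R); last by rewrite sum_delta2 sum_delta2.
apply: eq_bigr => p' _; rewrite summxE; apply: eq_bigr => q' _.
rewrite summxE mulr_sumr mulr_suml; apply: eq_bigr => i' _.
rewrite summxE mulr_sumr mulr_suml; apply: eq_bigr => j' _.
rewrite !mxE !cidx_eq (eq_sym i) (eq_sym p) (eq_sym j) (eq_sym q).
by case: (i' == i); case: (p' == p); case: (j' == j); case: (q' == q);
  rewrite /= ?mulr1 ?mulr0 ?mul0r ?mulrA.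
Qed.


Lemma kron_vec (A B X : 'M[R]_n) : kron A B *m vec X = vec (B *m X *m A^T).
Proof.
apply: cV_cidxP => i p; rewrite mulmx_cidx vecE !mxE.
apply: eq_bigr => q _; rewrite [in RHS]mxE mulr_suml.
apply: eq_bigr => j _; rewrite kronE vecE !mxE.
by rewrite [RHS]mulrC mulrA.
Qed.

Lemma commE (a b c d : 'I_n) :
  commmx R n (cidx a b) (cidx c d) = ((a == d) && (b == c))%:R.
Proof.
rewrite /commmx summxE.
transitivity (\sum_(i < n) \sum_(j < n) ((j == c) && (i == d))%:R *
   ((i == a) && (j == b))%:R :> R); last first.
  by rewrite sum_delta2 andbC.
apply: eq_bigr => i _; rewrite summxE; apply: eq_bigr => j _.
rewrite !mxE !cidx_eq (eq_sym i a) (eq_sym j b) (eq_sym j c) (eq_sym i d).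
by case: (a == i); case: (b == j); case: (c == j); case: (d == i);
  rewrite /= ?mulr1 ?mulr0.
Qed.

Lemma comm_vec (X : 'M[R]_n) : commmx R n *m vec X = vec X^T.
Proof.
apply: cV_cidxP => a b; rewrite mulmx_cidx vecE mxE.
rewrite exchange_big /= -[RHS](sum_delta2 (fun j q => X j q) b a).
apply: eq_bigr => j _; apply: eq_bigr => q _.
by rewrite commE vecE mulrC (eq_sym a) (eq_sym b) andbC.
Qed.

Lemma blkvec (Z : 'M[R]_(n * n)) (k : 'I_n) (D : 'M[R]_n) :
  (unvec (Z *m vec D)) *m delta_mx k 0 = \sum_(q < n) blk Z k q *m col q D.
Proof.
apply/colP => i; rewrite mxE summxE (bigD1 k) //= big1 => [|j Hj]; last first.
  by rewrite !mxE (negbTE Hj) mulr0.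
rewrite [delta_mx _ _ _ _]mxE !eqxx mulr1 addr0 unvecE mulmx_cidx.
apply: eq_bigr => q _; rewrite mxE; apply: eq_bigr => j _.
by rewrite !mxE vecE.
Qed.

End Idx.
Section IP.
Variables (R : realType) (n : nat).
Implicit Types x y z : 'cV[R]_n.

Lemma ipDl x y z : ip (x + y) z = ip x z + ip y z.
Proof. by rewrite /ip linearD /= mulmxDl mxE. Qed.
Lemma ipDr x y z : ip x (y + z) = ip x y + ip x z.
Proof. by rewrite /ip mulmxDr mxE. Qed.
Lemma ipZl a x y : ip (a *: x) y = a * ip x y.
Proof. by rewrite /ip linearZ /= -scalemxAl mxE. Qed.
Lemma ipZr a x y : ip x (a *: y) = a * ip x y.
Proof. by rewrite /ip -scalemxAr mxE. Qed.
Lemma ipNl x y : ip (- x) y = - ip x y.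
Proof. by rewrite -scaleN1r ipZl mulN1r. Qed.
Lemma ipNr x y : ip x (- y) = - ip x y.
Proof. by rewrite -scaleN1r ipZr mulN1r. Qed.
Lemma ipBl x y z : ip (x - y) z = ip x z - ip y z.
Proof. by rewrite ipDl ipNl. Qed.
Lemma ipBr x y z : ip x (y - z) = ip x y - ip x z.
Proof. by rewrite ipDr ipNr. Qed.
Lemma ipC x y : ip x y = ip y x.
Proof. by rewrite /ip -[in LHS](trmxK (x^T *m y)) [in LHS]mxE trmx_mul trmxK. Qed.
Lemma ip_mul x (B : 'M[R]_n) y : ip x (B *m y) = ip (B^T *m x) y.
Proof. by rewrite /ip trmx_mul trmxK mulmxA. Qed.
Lemma ip_sumr (I : finType) (P : pred I) x (F : I -> 'cV[R]_n) :
  ip x (\sum_(i | P i) F i) = \sum_(i | P i) ip x (F i).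
Proof. by rewrite /ip mulmx_sumr summxE. Qed.
Lemma ip0r x : ip x 0 = 0.
Proof. by rewrite /ip mulmx0 mxE. Qed.
Lemma ip_self_eq0 x : ip x x = 0 -> x = 0.
Proof.
rewrite /ip mxE => /eqP; rewrite psumr_eq0 => [/allP H|i _]; last first.
  by rewrite mxE -expr2 sqr_ge0.
apply/colP => i; have /H : i \in index_enum 'I_n by rewrite mem_index_enum.
by rewrite mxE -expr2 sqrf_eq0 mxE => /eqP ->.
Qed.
End IP.
Section Model.
Variables (R : realType) (n : nat) (Sigma : 'M[R]_n) (gam : 'I_n -> R).
Hypothesis HSsym : Sigma^T = Sigma.
Hypothesis HSpd : forall x : 'cV[R]_n, x != 0 -> 0 < (x^T *m Sigma *m x) 0 0.
Hypothesis Hgam : forall i, 0 < gam i.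

Local Notation G := (Gam gam).
Local Notation K := (Kmx Sigma gam).

Lemma Gam_tr : G^T = G.
Proof. by rewrite /Gam tr_diag_mx. Qed.

Lemma Kmx_vec X : K *m vec X = vec (Sigma *m X *m G + G *m X *m Sigma).
Proof. by rewrite /Kmx mulmxDl !kron_vec Gam_tr HSsym vecD. Qed.

Lemma tr11 (A : 'M[R]_1) : \tr A = A 0 0.
Proof. by rewrite /mxtrace big_ord1. Qed.

Lemma vec_dot (X Y : 'M[R]_n) : ((vec X)^T *m vec Y) 0 0 = \tr (X^T *m Y).
Proof.
rewrite mxE sum_cidx /mxtrace; apply: eq_bigr => j _; rewrite mxE.
by apply: eq_bigr => i _; rewrite !mxE !vecE.
Qed.

Lemma psd (x : 'cV[R]_n) : 0 <= (x^T *m Sigma *m x) 0 0.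
Proof.
have [->|/HSpd/ltW//] := eqVneq x 0.
by rewrite mulmx0 mxE.
Qed.

Lemma dqE m (A : 'M[R]_m) i j : (delta_mx (0 : 'I_1) i *m A *m delta_mx j (0 : 'I_1)) 0 0 = A i j.
Proof. by rewrite -rowE -colE !mxE. Qed.

Lemma quad_col (Y : 'M[R]_n) i :
  (Y^T *m Sigma *m Y) i i = ((col i Y)^T *m Sigma *m col i Y) 0 0.
Proof. by rewrite colE trmx_mul trmx_delta !mulmxA -(mulmxA _ Y) -dqE !mulmxA. Qed.

Lemma trG (A : 'M[R]_n) : \tr (G *m A) = \sum_i gam i * A i i.
Proof. by rewrite /mxtrace; apply: eq_bigr => i _; rewrite /Gam mul_diag_mx !mxE. Qed.

Lemma trG_ge (Y : 'M[R]_n) k :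
  gam k * (Y^T *m Sigma *m Y) k k <= \tr (G *m (Y^T *m Sigma *m Y)).
Proof.
rewrite trG (bigD1 k) //= lerDl sumr_ge0 // => i _.
by apply: mulr_ge0; [exact: ltW | rewrite quad_col; exact: psd].
Qed.

Lemma trG_ge0 (Y : 'M[R]_n) : 0 <= \tr (G *m (Y^T *m Sigma *m Y)).
Proof.
rewrite trG sumr_ge0 // => i _.
by apply: mulr_ge0; [exact: ltW | rewrite quad_col; exact: psd].
Qed.

Lemma trG_eq0 (Y : 'M[R]_n) : \tr (G *m (Y^T *m Sigma *m Y)) = 0 -> Y = 0.
Proof.
rewrite trG => /eqP; rewrite psumr_eq0 => [/allP H|i _]; last first.
  by apply: mulr_ge0; [exact: ltW | rewrite quad_col; exact: psd].
apply/matrixP => j i; rewrite mxE.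
have /H : i \in index_enum 'I_n by rewrite mem_index_enum.
rewrite /= mulf_eq0 gt_eqF //= quad_col => Hi.
have : col i Y = 0.
  apply/eqP; apply: contraT => /HSpd; by rewrite (eqP Hi) ltxx.
by move/colP/(_ j); rewrite !mxE.
Qed.

Lemma Kmx_unit : K \in unitmx.
Proof.
rewrite unitmxE unitfE; apply/negP => /det0P [v vn0 vK0].
set X := unvec v^T.
have vX : vec X = v^T by rewrite unvecK.
have : ((vec X)^T *m (K *m vec X)) 0 0 = 0.
  by rewrite vX trmxK mulmxA vK0 mul0mx mxE.
rewrite Kmx_vec vec_dot mulmxDr mxtraceD.
have -> : \tr (X^T *m (Sigma *m X *m G)) = \tr (G *m (X^T *m Sigma *m X)).
  by rewrite !mulmxA mxtrace_mulC !mulmxA.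
have -> : \tr (X^T *m (G *m X *m Sigma)) = \tr (G *m (X^T^T *m Sigma *m X^T)).
  by rewrite trmxK mxtrace_mulC !mulmxA.
move=> /eqP; rewrite paddr_eq0 ?trG_ge0 // => /andP [/eqP /trG_eq0 X0 _].
by move: vn0; rewrite -[v]trmxK -vX X0 vec0 trmx0 eqxx.
Qed.


Local Notation W := (stableW Sigma gam).
Local Notation L := (Lmx Sigma gam).

Lemma stableW_L M : W M = unvec (L *m vec M).
Proof.
rewrite /stableW /Lmx -scalemxAl mulmxDl -mulmxA comm_vec -mulmxDr vecD.
by [].
Qed.

Lemma stableWD M N : W (M + N) = W M + W N.
Proof. by rewrite !stableW_L vecD mulmxDr unvecD. Qed.

Lemma stableWZ a M : W (a *: M) = a *: W M.
Proof. by rewrite !stableW_L vecZ -scalemxAr unvecZ. Qed.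

Lemma stableW_col M k : W M *m delta_mx k 0 = \sum_q blk L k q *m col q M.
Proof. by rewrite stableW_L blkvec. Qed.

Lemma stableW_eq M :
  Sigma *m W M *m G + G *m W M *m Sigma = 2^-1 *: (M + M^T).
Proof.
apply: vec_inj; rewrite -Kmx_vec /stableW unvecK -scalemxAr mulKVmx ?Kmx_unit //.
by rewrite vecZ.
Qed.

Lemma stableW_sym M : (W M)^T = W M.
Proof.
apply: vec_inj; rewrite -(mulKmx Kmx_unit (vec (W M)^T)) -(mulKmx Kmx_unit (vec (W M))).
congr (_ *m _); rewrite !Kmx_vec; congr vec.
have -> : Sigma *m (W M)^T *m G + G *m (W M)^T *m Sigma =
   (Sigma *m W M *m G + G *m W M *m Sigma)^T.
  by rewrite linearD /= !trmx_mul HSsym Gam_tr !mulmxA addrC.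
by rewrite stableW_eq linearZ /= linearD /= trmxK addrC.
Qed.

Lemma concave (h : 'cV[R]_n) k w :
  w = W (h *m (delta_mx k 0)^T) *m delta_mx k 0 ->
  - ip h w + gam k * ip w (Sigma *m w) <= 0.
Proof.
move=> Hw; set D := h *m (delta_mx k 0)^T; set X := W D.
have XS : X^T = X by rewrite stableW_sym.
have E1 : ip h w = \tr (D^T *m X).
  rewrite /ip Hw -/X /D trmx_mul trmxK -mulmxA mxtrace_mulC tr11.
  by rewrite mulmxA.
have E2 : \tr (D^T *m X) = \tr (D *m X).
  by rewrite -mxtrace_tr trmx_mul trmxK XS mxtrace_mulC.
have E3 : \tr (D^T *m X) = \tr ((2^-1 *: (D + D^T)) *m X).
  rewrite -scalemxAl mxtraceZ mulmxDl mxtraceD -E2; lra.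
have E4 : \tr (D^T *m X) = 2 * \tr (G *m (X^T *m Sigma *m X)).
  rewrite E3 -stableW_eq -/X mulmxDl mxtraceD XS.
  have -> : \tr (Sigma *m X *m G *m X) = \tr (G *m (X *m Sigma *m X)).
    by rewrite -mulmxA mxtrace_mulC !mulmxA.
  by rewrite !mulmxA; ring.
have E5 : (X^T *m Sigma *m X) k k = ip w (Sigma *m w).
  by rewrite quad_col /ip Hw colE [in RHS]mulmxA.
have H1 := trG_ge X k.
have H2 : 0 <= ip w (Sigma *m w) by rewrite /ip mulmxA; exact: psd.
have H3 := Hgam k.
rewrite E1 E4 -E5; rewrite -E5 in H2.
set a := (X^T *m Sigma *m X) k k in H1 H2 *.
set t := \tr _ in H1 *.
have : 0 <= gam k * a by rewrite mulr_ge0 // ltW.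
lra.
Qed.

Section Agent.
Variables (k : 'I_n) (delta : 'I_n -> 'cV[R]_n).
Local Notation e := (delta_mx k (0 : 'I_1) : 'cV[R]_n).
Definition wM M := W (M + colsmx delta) *m e.
Definition Ah h := W (h *m e^T) *m e.
Definition qf h := - ip h (Ah h) + gam k * ip (Ah h) (Sigma *m Ah h).
Definition lf h M := - ip (delta k) (Ah h) - ip h (wM M) + 2 * gam k * ip (Ah h) (Sigma *m wM M).

Lemma colsmx_replace d :
  colsmx (replace_col delta k d) = colsmx delta + (d - delta k) *m e^T.
Proof.
apply/matrixP => i j; rewrite !mxE big_ord1 !mxE /replace_col.
case: (eqVneq j k) => [->|Hj]; first by rewrite !eqxx /= mulr1 addrC subrK.
by rewrite /= mulr0 addr0.
Qed.

Lemma util_diff d M : utility Sigma gam k (replace_col delta k d) M =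
  utility Sigma gam k delta M + qf (d - delta k) + lf (d - delta k) M.
Proof.
rewrite /utility /evec colsmx_replace addrA.
rewrite (stableWD (M + colsmx delta)) (mulmxDl (W (M + colsmx delta))).
rewrite /replace_col eqxx.
rewrite /qf /lf /wM /Ah.
set w := W (M + colsmx delta) *m _; set a := W (_ *m _) *m _.
set h := d - delta k.
have -> : d = delta k + h by rewrite /h addrC subrK.
clearbody w a h.
rewrite !ipDl !ipDr !mulmxDr ?ipDr ?ipDl.
have -> : ip w (Sigma *m a) = ip a (Sigma *m w) by rewrite ip_mul HSsym ipC.
ring.
Qed.

Lemma Ah_blk h : Ah h = blk L k k *m h.
Proof.
rewrite /Ah stableW_col (bigD1 k) //= big1 ?addr0 => [|j Hj].
  by congr (_ *m _); apply/colP => i; rewrite !mxE big_ord1 !mxE eqxx mulr1.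
apply/colP => i; rewrite !mxE big1 // => l _.
by rewrite !mxE big_ord1 !mxE (negbTE Hj) /= mulr0 mulr0.
Qed.

Local Notation B := (blk L k k).
Local Notation Pm := ((2 * gam k) *: (B^T *m Sigma)).

Lemma wM_blk M : wM M = W M *m e + \sum_q blk L k q *m delta q.
Proof.
rewrite /wM stableWD mulmxDl (stableW_col (colsmx delta)); congr (_ + _).
apply: eq_bigr => q _; congr (_ *m _); apply/colP => i; by rewrite !mxE.
Qed.

Variable (S : {set 'I_n}).
Hypothesis HS : forall j, j \notin S -> delta j = 0.
Local Notation s' := (\sum_(j in S | j != k) blk L k j *m delta j).

Lemma sum_split : \sum_q blk L k q *m delta q = B *m delta k + s'.
Proof.
rewrite (bigD1 k) //=; congr (_ + _).
rewrite [RHS]big_mkcondl /=; apply: eq_bigr => j _.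
by case: ifP => // /negbT /HS ->; rewrite mulmx0.
Qed.

Lemma sumT : \sum_(j in S | j != k) Tmx Sigma gam k j *m delta j = (1%:M - Pm) *m s'.
Proof.
rewrite mulmx_sumr; apply: eq_bigr => j /andP [_ Hj].
by rewrite /Tmx (negbTE Hj) mulmxA.
Qed.

Lemma lf_r h M : lf h M = - ip h (Tmx Sigma gam k k *m delta k +
   \sum_(j in S | j != k) Tmx Sigma gam k j *m delta j - (Pm - 1%:M) *m (W M *m e)).
Proof.
rewrite sumT /lf wM_blk sum_split Ah_blk /Tmx eqxx.
set v := W M *m e; set t := s'; clearbody v t.
have E1 : ip (delta k) (B *m h) = ip h (B^T *m delta k) by rewrite ip_mul ipC.
have E2 : forall w, ip (B *m h) (Sigma *m w) = ip h (B^T *m Sigma *m w).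
  by move=> w; rewrite ipC ip_mul ipC mulmxA.
rewrite E1 E2.
rewrite !mulmxDl ?mulNmx ?mulmxDr ?mulmxNr ?mul1mx -?scalemxAl ?mulmxA.
rewrite ?ipDr ?ipNr ?ipZr.
rewrite (ipDr h ((2 * gam k) *: (B^T *m Sigma *m v))) ipNr ipZr.
ring.
Qed.

End Agent.

End Model.

Section Homog.
Variables (R : realType) (n : nat) (Sigma : 'M[R]_n) (gam : 'I_n -> R).
Lemma Ah_Z k c h : Ah Sigma gam k (c *: h) = c *: Ah Sigma gam k h.
Proof. by rewrite !Ah_blk scalemxAr. Qed.
Lemma qf_Z k c h :
  qf Sigma gam k (c *: h) = c ^+ 2 * qf Sigma gam k h.
Proof.
rewrite /qf Ah_Z -scalemxAr !ipZl !ipZr; ring.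
Qed.
End Homog.
Lemma amgm2 (R : realType) (x y : R) : 0 <= x -> 0 <= y -> x * y <= x * x + y * y.
Proof. move=> hx hy. have h := sqr_ge0 (x - y). rewrite expr2 in h. nra. Qed.

Section Lin.
Variables (R : realType) (n : nat).
Definition lin (f : 'M[R]_n -> R) := forall a M N, f (a *: M + N) = a * f M + f N.

Lemma lin0 {f} : lin f -> f 0 = 0.
Proof.
move=> H; have := H 1 0 0; rewrite addr0 scaler0 mul1r; lra.
Qed.

Lemma linD {f} : lin f -> forall M N, f (M + N) = f M + f N.
Proof. by move=> H M N; rewrite -(scale1r M) H mul1r scale1r. Qed.

Lemma linZ {f} : lin f -> forall a M, f (a *: M) = a * f M.
Proof. by move=> H a M; rewrite -(addr0 (a *: M)) H lin0 // addr0. Qed.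

Lemma lin_sum {f} : lin f -> forall M,
  f M = \sum_(i < n) \sum_(j < n) M i j * f (delta_mx i j).
Proof.
move=> H M; rewrite {1}(matrix_sum_delta M).
rewrite (big_morph f (linD H) (lin0 H)); apply: eq_bigr => i _.
rewrite (big_morph f (linD H) (lin0 H)); apply: eq_bigr => j _.
by rewrite linZ.
Qed.

End Lin.

Section Prob.
Variables (R : realType) (n : nat) (d : measure_display) (Omega : measurableType d).
Variables (P : probability Omega R) (Mr : Omega -> 'M[R]_n).
Hypothesis Hmeas : forall i j, measurable_fun setT (fun w => Mr w i j).
Hypothesis Hmom1 : forall i j, P.-integrable setT (fun w => (Mr w i j)%:E).
Hypothesis Hmom2 : forall i j, P.-integrable setT (fun w => ((Mr w i j) ^+ 2)%:E).

Definition IG (F : 'M[R]_n -> R) := P.-integrable setT (EFin \o (fun w => F (Mr w))).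

Lemma IG_D F1 F2 : IG F1 -> IG F2 -> IG (fun M => F1 M + F2 M).
Proof. by move=> h1 h2; apply: eq_integrable (integrableD _ h1 h2) => // x. Qed.

Lemma IG_Z a F : IG F -> IG (fun M => a * F M).
Proof. by move=> h; apply: eq_integrable (integrableZl _ a h) => // x. Qed.

Lemma IG_cst c : IG (fun _ => c).
Proof.
rewrite /IG; apply/integrableP; split => //.
  exact: measurable_cst.
have H1 : P setT = 1%E := probability_setT P.
rewrite integral_cst //= H1 mule1; exact: ltry.
Qed.

Lemma IG_sumS (I : Type) (s : seq I) (F : I -> 'M[R]_n -> R) :
  (forall i, IG (F i)) -> IG (fun M => \sum_(i <- s) F i M).
Proof.
move=> h; rewrite /IG.
have := @integrable_sum _ _ _ P setT measurableT I s predT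
  (fun i => EFin \o (fun w => F i (Mr w))) (fun i _ => h i).
apply: eq_integrable => // x _ /=; by rewrite sumEFin.
Qed.

Lemma IG_sum (I : finType) (F : I -> 'M[R]_n -> R) :
  (forall i, IG (F i)) -> IG (fun M => \sum_i F i M).
Proof. exact: IG_sumS. Qed.

Lemma IG_entry i j : IG (fun M => M i j).
Proof. exact: Hmom1. Qed.

Lemma IG_pair i j k l : IG (fun M => M i j * M k l).
Proof.
have H2 := @IG_D (fun M => M i j ^+ 2) (fun M => M k l ^+ 2)
  (Hmom2 i j) (Hmom2 k l).
rewrite /IG; apply: (@le_integrable _ _ _ P setT measurableT _ _ _ _ H2).
  apply/measurable_realfun.measurable_EFinP; exact: measurable_realfun.measurable_funM.
move=> x _ /=; rewrite lee_fin normrM.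
set a := Mr x i j; set b := Mr x k l.
rewrite (@ger0_norm _ (a ^+ 2 + b ^+ 2)) ?addr_ge0 ?sqr_ge0 //.
rewrite -(real_normK (num_real a)) -(real_normK (num_real b)).
rewrite !expr2; apply: amgm2; exact: normr_ge0.
Qed.

Lemma IG_lin f : lin f -> IG f.
Proof.
move=> H.
have H1 : IG (fun M => \sum_(i < n) \sum_(j < n) (f (delta_mx i j)) * M i j).
  apply: IG_sum => i; apply: IG_sum => j; apply: IG_Z; exact: IG_entry.
apply: eq_integrable H1 => // x _ /=.
by rewrite (lin_sum H); congr EFin; apply: eq_bigr => i _;
    apply: eq_bigr => j _; rewrite mulrC.
Qed.

Lemma IG_linprod f g : lin f -> lin g -> IG (fun M => f M * g M).
Proof.
move=> Hf Hg.
have E : forall M, f M * g M = \sum_(p : 'I_n * 'I_n) \sum_(q : 'I_n * 'I_n)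
   (f (delta_mx p.1 p.2) * g (delta_mx q.1 q.2)) * (M p.1 p.2 * M q.1 q.2).
  move=> M; rewrite [f M](lin_sum Hf) [g M](lin_sum Hg).
  rewrite [X in X * _ = _]pair_bigA [X in _ * X = _]pair_bigA /= mulr_suml.
  apply: eq_bigr => p _; rewrite mulr_sumr; apply: eq_bigr => q _.
  by rewrite mulrACA mulrC.
have H1 : IG (fun M => \sum_(p : 'I_n * 'I_n)
   \sum_(q : 'I_n * 'I_n) (f (delta_mx p.1 p.2) * g (delta_mx q.1 q.2)) *
     (M p.1 p.2 * M q.1 q.2)).
  apply: IG_sum => p; apply: IG_sum => q; apply: IG_Z; exact: IG_pair.
by apply: eq_integrable H1 => // x _ /=; rewrite E.
Qed.

Lemma IG_aff2 f g c e : lin f -> lin g -> IG (fun M => (f M + c) * (g M + e)).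
Proof.
move=> Hf Hg.
have -> : (fun M => (f M + c) * (g M + e)) =
  (fun M => f M * g M + (e * f M + (c * g M + c * e))).
  by apply: funext => M; ring.
apply: IG_D; first exact: IG_linprod.
apply: IG_D; first by apply: IG_Z; exact: IG_lin.
apply: IG_D; first by apply: IG_Z; exact: IG_lin.
exact: IG_cst.
Qed.

Definition RI (F : 'M[R]_n -> R) := Rintegral P setT (fun w => F (Mr w)).

Lemma RI_D F1 F2 : IG F1 -> IG F2 -> RI (fun M => F1 M + F2 M) = RI F1 + RI F2.
Proof. by move=> h1 h2; rewrite /RI RintegralD. Qed.

Lemma RI_cst c : RI (fun _ => c) = c.
Proof.
have H1 : P setT = 1%E := probability_setT P.
rewrite /RI Rintegral_cst // [fine _](_ : _ = 1) ?mulr1 //; exact: (congr1 fine H1).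
Qed.

Lemma RI_sumS (I : Type) (s : seq I) (F : I -> 'M[R]_n -> R) :
  (forall i, IG (F i)) -> RI (fun M => \sum_(i <- s) F i M) = \sum_(i <- s) RI (F i).
Proof.
move=> h; elim: s => [|i s IH].
  rewrite big_nil -[RHS](RI_cst 0); apply: eq_Rintegral => x _ /=.
  by rewrite big_nil.
rewrite big_cons -IH -(@RI_D (F i) (fun M => \sum_(j <- s) F j M)) //; last exact: IG_sumS.
by apply: eq_Rintegral => x _ /=; rewrite big_cons.
Qed.

Lemma RI_Z a F : IG F -> RI (fun M => a * F M) = a * RI F.
Proof. by move=> h; rewrite /RI RintegralZl. Qed.

Definition EMp : 'M[R]_n := \matrix_(i, j) Rintegral P setT (fun w => Mr w i j).

Lemma RI_lin f c : lin f -> RI (fun M => f M + c) = f EMp + c.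
Proof.
move=> H; rewrite RI_D ?RI_cst //; last exact: IG_cst; last exact: IG_lin.
congr (_ + _); rewrite (lin_sum H EMp).
transitivity (RI (fun M => \sum_(i < n) \sum_(j < n) f (delta_mx i j) * M i j)).
  rewrite /RI; apply: eq_Rintegral => x _ /=; rewrite (lin_sum H).
  by apply: eq_bigr => i _; apply: eq_bigr => j _; rewrite mulrC.
rewrite RI_sumS; last by move=> i; apply: IG_sum => j; apply: IG_Z; exact: IG_entry.
apply: eq_bigr => i _; rewrite RI_sumS; last by move=> j; apply: IG_Z; exact: IG_entry.
apply: eq_bigr => j _; rewrite RI_Z; last exact: IG_entry.
by rewrite mxE mulrC.
Qed.



End Prob.
Section Final.
Variables (R : realType) (n : nat) (Sigma : 'M[R]_n) (gam : 'I_n -> R).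
Hypothesis HSsym : Sigma^T = Sigma.
Hypothesis HSpd : forall x : 'cV[R]_n, x != 0 -> 0 < (x^T *m Sigma *m x) 0 0.
Hypothesis Hgam : forall i, 0 < gam i.
Variables (d : measure_display) (Omega : measurableType d).
Variables (Pk : 'I_n -> probability Omega R) (Mr : Omega -> 'M[R]_n).
Hypothesis Hmeas : forall i j, measurable_fun setT (fun w => Mr w i j).
Hypothesis Hmom1 : forall k i j, (Pk k).-integrable setT (fun w => (Mr w i j)%:E).
Hypothesis Hmom2 : forall k i j, (Pk k).-integrable setT (fun w => ((Mr w i j) ^+ 2)%:E).

Local Notation W := (stableW Sigma gam).

Lemma linW_e (k : 'I_n) M N a :
  W (a *: M + N) *m delta_mx k (0 : 'I_1) = a *: (W M *m delta_mx k (0 : 'I_1)) + W N *m delta_mx k (0 : 'I_1).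
Proof. by rewrite stableWD stableWZ mulmxDl -scalemxAl. Qed.

Lemma lin_ip (k : 'I_n) u (B : 'M[R]_n) :
  lin (fun M => ip u (B *m (W M *m delta_mx k (0 : 'I_1)))).
Proof. by move=> a M N; rewrite linW_e mulmxDr -scalemxAr ipDr ipZr. Qed.

Lemma lin_entry (k : 'I_n) (B : 'M[R]_n) i :
  lin (fun M => (B *m (W M *m delta_mx k (0 : 'I_1))) i 0).
Proof. by move=> a M N; rewrite linW_e mulmxDr -scalemxAr !mxE. Qed.

Lemma IG_ext (P : probability Omega R) F G : (forall M, F M = G M) -> IG P Mr F -> IG P Mr G.
Proof. by move=> H; have -> : G = F by apply: funext => M; rewrite H. Qed.

Lemma IG_util k delta : IG (Pk k) Mr (utility Sigma gam k delta).
Proof.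
pose c := W (colsmx delta) *m delta_mx k (0 : 'I_1).
have E : forall M, utility Sigma gam k delta M =
   (- 1) * (ip (delta k) (1%:M *m (W M *m delta_mx k (0 : 'I_1))) + ip (delta k) c) +
   gam k * \sum_a (((1%:M *m (W M *m delta_mx k (0 : 'I_1))) a 0 + c a 0) *
                   ((Sigma *m (W M *m delta_mx k (0 : 'I_1))) a 0 + (Sigma *m c) a 0)).
  move=> M; rewrite /utility /evec stableWD mulmxDl -/c !mul1mx ipDr mulN1r.
  congr (_ + _ * _); rewrite /ip mxE; apply: eq_bigr => a _.
  by rewrite mulmxDr !mxE.
apply: (IG_ext (fun M => esym (E M))); clear E.
apply: IG_D; first by apply: IG_Z; apply: IG_D; [exact: IG_lin (Hmom1 k) _ (lin_ip _ _ _)|exact: IG_cst].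
apply: IG_Z; apply: IG_sum => a.
apply: (IG_aff2 Hmeas (Hmom1 k) (Hmom2 k)); exact: lin_entry.
Qed.

Lemma expRI k delta : exp_utility Sigma gam Pk Mr k delta = RI (Pk k) Mr (utility Sigma gam k delta).
Proof. by []. Qed.

Lemma EM_EMp k : Defs.EM Pk Mr k = EMp (Pk k) Mr.
Proof. by []. Qed.

Lemma exp_diff k delta dk :
  exp_utility Sigma gam Pk Mr k (replace_col delta k dk) =
  exp_utility Sigma gam Pk Mr k delta +
  (qf Sigma gam k (dk - delta k) + lf Sigma gam k delta (dk - delta k) (Defs.EM Pk Mr k)).
Proof.
set h := dk - delta k.
pose u := (2 * gam k) *: (Sigma *m Ah Sigma gam k h) - h.
pose c0 := - ip (delta k) (Ah Sigma gam k h) + ip u (W (colsmx delta) *m delta_mx k (0 : 'I_1)).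
pose phi := fun M => ip u (1%:M *m (W M *m delta_mx k (0 : 'I_1))).
have Hl : forall M, lf Sigma gam k delta h M = phi M + c0.
  move=> M; rewrite /lf /wM /phi /c0 stableWD mulmxDl mul1mx.
  rewrite /u !ipBl !ipZl mulmxDr !ipDr ![ip (Ah _ _ _ _) _]ip_mul HSsym; ring.
have Hphi : lin phi by exact: lin_ip.
rewrite !expRI.
transitivity (RI (Pk k) Mr (fun M => utility Sigma gam k delta M + (phi M + (c0 + qf Sigma gam k h)))).
  rewrite /RI; apply: eq_Rintegral => x _ /=.
  by rewrite (util_diff _ HSsym) -/h Hl; ring.
rewrite RI_D; [|exact: IG_util|by apply: IG_D; [exact: IG_lin (Hmom1 k) _ Hphi|exact: IG_cst]].
rewrite (RI_lin (Hmom1 k)) // -EM_EMp Hl; congr (_ + _); ring.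
Qed.

Lemma aux_contra (E t s a : R) : 0 < t -> 0 < s -> 0 <= a -> 0 < t * t ->
  t * s = 2 * (t * t) * (a + 1) -> E + ((- t) ^+ 2 * - a - - t * s) <= E -> False.
Proof. move=> ? ? ? ? H1; rewrite expr2 => H2. nra. Qed.

Lemma ip_self_ge0 (x : 'cV[R]_n) : 0 <= ip x x.
Proof. by rewrite /ip mxE sumr_ge0 // => i _; rewrite mxE -expr2 sqr_ge0. Qed.

Lemma qf_le0 k h : qf Sigma gam k h <= 0.
Proof. exact: (concave HSsym HSpd Hgam). Qed.

Lemma br_iff k delta (S : {set 'I_n}) : (forall j, j \notin S -> delta j = 0) ->
  best_response Sigma gam Pk Mr k delta <-> br_eq Sigma gam Pk Mr S k delta.
Proof.
move=> HS.
set r := Tmx Sigma gam k k *m delta k +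
   \sum_(j in S | j != k) Tmx Sigma gam k j *m delta j -
   ((2 * gam k) *: ((blk (Lmx Sigma gam) k k)^T *m Sigma) - 1%:M) *m vk Sigma gam Pk Mr k.
have key : forall dk, exp_utility Sigma gam Pk Mr k (replace_col delta k dk) =
  exp_utility Sigma gam Pk Mr k delta + (qf Sigma gam k (dk - delta k) - ip (dk - delta k) r).
  by move=> dk; rewrite exp_diff (lf_r _ _ _ HS).
have beq : br_eq Sigma gam Pk Mr S k delta <-> r = 0.
  rewrite /br_eq /r; split => [->|/eqP]; first by rewrite subrr.
  by rewrite subr_eq0 => /eqP.
rewrite beq; split; last first.
  move=> r0 dk; rewrite key r0 ip0r subr0.
  have := qf_le0 k (dk - delta k); lra.
move=> Hbr; case: (eqVneq r 0) => // rn0; exfalso.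
have s0 : 0 < ip r r.
  rewrite lt_neqAle ip_self_ge0 andbT eq_sym; apply/negP => /eqP /ip_self_eq0.
  by move/eqP; rewrite (negbTE rn0).
set s := ip r r in s0.
set a := - qf Sigma gam k r.
have a0 : 0 <= a by rewrite /a oppr_ge0 qf_le0.
set t := s / (2 * (a + 1)).
have ht : t * (2 * (a + 1)) = s by rewrite /t mulfVK // mulf_neq0 // gt_eqF // ltr_pwDr.
have t0 : 0 < t by rewrite /t divr_gt0 // mulr_gt0 // ltr_pwDr.
have := Hbr (delta k + (- t) *: r); rewrite key.
have -> : delta k + - t *: r - delta k = (- t) *: r by rewrite addrC addKr.
rewrite qf_Z ipZl -/s.
have -> : qf Sigma gam k r = - a by rewrite /a opprK.
move=> H.
have H2 : t * s = 2 * (t * t) * (a + 1) by rewrite -ht; ring.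
have tt0 : 0 < t * t by rewrite mulr_gt0.
exact: (aux_contra t0 s0 a0 tt0 H2 H).
Qed.

End Final.

Unset Implicit Arguments. Set Strict Implicit. Set Printing Implicit Defensive.

Theorem mainTheorem9 (R : realType) (n : nat)
  (Sigma : 'M[R]_n) (gam : 'I_n -> R)
  (HSsym : Sigma^T = Sigma)
  (HSpd : forall x : 'cV[R]_n, x != 0 -> 0 < (x^T *m Sigma *m x) 0 0)
  (Hgam : forall i, 0 < gam i)
  (d : measure_display) (Omega : measurableType d)
  (Pk : 'I_n -> probability Omega R) (Mr : Omega -> 'M[R]_n)
  (Hmeas : forall i j, measurable_fun setT (fun w => Mr w i j))
  (Hmom1 : forall k i j, (Pk k).-integrable setT (fun w => (Mr w i j)%:E))
  (Hmom2 : forall k i j, (Pk k).-integrable setT (fun w => ((Mr w i j) ^+ 2)%:E))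
  (S : {set 'I_n}) :
  (forall (k : 'I_n) (delta : 'I_n -> 'cV[R]_n),
     k \in S -> (forall j, j \notin S -> delta j = 0) ->
     (best_response Sigma gam Pk Mr k delta <-> br_eq Sigma gam Pk Mr S k delta))
  /\
  (forall delta : 'I_n -> 'cV[R]_n, (forall j, j \notin S -> delta j = 0) ->
     (nash Sigma gam Pk Mr S delta <->
      (forall k, k \in S -> br_eq Sigma gam Pk Mr S k delta)))
  /\
  ((~ exists delta : 'I_n -> 'cV[R]_n, (forall j, j \notin S -> delta j = 0) /\
        (forall k, k \in S -> br_eq Sigma gam Pk Mr S k delta)) ->
   ~ exists delta : 'I_n -> 'cV[R]_n, (forall j, j \notin S -> delta j = 0) /\
        nash Sigma gam Pk Mr S delta).
Proof.
have BR := fun k delta HS => br_iff HSsym HSpd Hgam Hmeas Hmom1 Hmom2 k (S := S) (delta := delta) HS.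
split; [|split].
- by move=> k delta _ HS; exact: BR.
- move=> delta HS; split => [Hn k kS | H k kS].
    by apply/(BR k delta HS); exact: Hn.
  by apply/(BR k delta HS); exact: H.
- move=> Hno [delta [HS Hn]]; apply: Hno; exists delta; split => // k kS.
  by apply/(BR k delta HS); exact: Hn.
Qed.
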